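(* Let $K$ be a field of characteristic $0$ and let $f\in K[[x_1,x_2]]$ be D-finite over $K(x_1,x_2)$, with non-zero annihilators $L_1\in K[x_1,x_2]\langle D_{x_1}\rangle$ and $L_2\in K[x_1,x_2]\langle D_{x_2}\rangle$ of orders at most $r_f$ and degrees at most $d_f$. Let $L=\sum_{i+j\le r_L}l_{i,j}(x_1,x_2)D_{x_1}^iD_{x_2}^j\in K[x_1,x_2]\langle D_{x_1},D_{x_2}\rangle$ be an operator of (total) order $r_L$ whose coefficients have total degree at most $d_L$, and let $g=L(f)$. Then there exist non-zero operators $A_1\in K[x_1,x_2]\langle D_{x_1}\rangle$ and $A_2\in K[x_1,x_2]\langle D_{x_2}\rangle$ with $A_1(g)=A_2(g)=0$, each of order $r_g\le r_f^2$ and degree $d_g\le (d_L+2d_f(r_f^2+r_L))\,r_f^2$.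
   Context: A series is D-finite over $K(x_1,x_2)$ if the $K(x_1,x_2)$-space spanned by all its partial derivatives is finite-dimensional. For an operator $\sum_{j=0}^r\ell_jD_{x_i}^j$ with polynomial coefficients and $\ell_r\ne0$, the order is $r$ and the degree is the maximal total degree of the coefficients $\ell_j$. *)

(* Defs.v *)
From HB Require Import structures.
From mathcomp Require Import all_boot all_order all_algebra.
From mathcomp Require Import multinomials.mpoly.
Set Implicit Arguments. Unset Strict Implicit. Unset Printing Implicit Defensive.
Import Order.TTheory GRing.Theory.
Local Open Scope ring_scope.

(* Formal power series in K[[x1,x2]] : coefficient of x1^i x2^j is f i j. *)
Definition series2 (K : fieldType) := nat -> nat -> K.

Definition D1 (K : fieldType) (f : series2 K) : series2 K :=
  fun i j => (i.+1)%:R * f i.+1 j.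
Definition D2 (K : fieldType) (f : series2 K) : series2 K :=
  fun i j => (j.+1)%:R * f i j.+1.

Definition pmul (K : fieldType) (p : {mpoly K[2]}) (f : series2 K) : series2 K :=
  fun i j => \sum_(m <- msupp p)
     (if (m ord0 <= i)%N && (m ord_max <= j)%N
      then p@_m * f (i - m ord0)%N (j - m ord_max)%N else 0).

(* An operator sum_{k} A`_k D_{x1}^k (resp. D_{x2}^k) with polynomial
   coefficients is represented by its coefficient sequence A. *)
Definition apply1 (K : fieldType) (A : seq {mpoly K[2]}) (f : series2 K) : series2 K :=
  fun i j => \sum_(k < size A) pmul A`_k (iter k (@D1 K) f) i j.
Definition apply2 (K : fieldType) (A : seq {mpoly K[2]}) (f : series2 K) : series2 K :=
  fun i j => \sum_(k < size A) pmul A`_k (iter k (@D2 K) f) i j.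

Definition apply12 (K : fieldType) (r : nat) (l : nat -> nat -> {mpoly K[2]})
  (f : series2 K) : series2 K :=
  fun i j => \sum_(a < r.+1) \sum_(b < (r - a).+1)
                pmul (l a b) (iter a (@D1 K) (iter b (@D2 K) f)) i j.

Definition nonzero_op (K : fieldType) (A : seq {mpoly K[2]}) :=
  exists k, A`_k != 0.
Definition order_le (K : fieldType) (A : seq {mpoly K[2]}) (r : nat) :=
  forall k, (r < k)%N -> A`_k = 0.
Definition degree_le (K : fieldType) (A : seq {mpoly K[2]}) (d : nat) :=
  forall k, (msize A`_k <= d.+1)%N.

(* Main.v *)
Require Import Defs.
From HB Require Import structures.
From mathcomp Require Import all_boot all_order all_algebra.
From mathcomp Require Import multinomials.ssrcomplements multinomials.mpoly.
From mathcomp Require Import boolp functions.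
From mathcomp Require Import zify ring.
Import GRing.Theory.
Set Implicit Arguments. Unset Strict Implicit. Unset Printing Implicit Defensive.
Local Open Scope ring_scope.


Section Series.
Variable K : fieldType.
Local Notation S := (series2 K).
Local Notation P := {mpoly K[2]}.
Implicit Types (p q : P) (h : S).

Lemma addsE (f g : S) i j : (f + g) i j = f i j + g i j. Proof. by []. Qed.
Lemma oppsE (f : S) i j : (- f) i j = - f i j. Proof. by []. Qed.
Lemma zerosE i j : (0 : S) i j = 0. Proof. by []. Qed.
Lemma sumsE (I : Type) (r : seq I) (Pr : pred I) (F : I -> S) i j :
  (\sum_(x <- r | Pr x) F x) i j = \sum_(x <- r | Pr x) F x i j.
Proof. by rewrite !fct_sumE. Qed.

Lemma seqE (f g : S) : (forall i j, f i j = g i j) -> f = g.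
Proof. by move=> H; apply/funext => i; apply/funext => j; apply: H. Qed.

Definition sc (c : K) (h : S) : S := fun i j => c * h i j.

Definition cnd (m : 'X_{1..2}) (i j : nat) := (m ord0 <= i)%N && (m ord_max <= j)%N.
Definition term (h : S) (m : 'X_{1..2}) (c : K) i j :=
  if cnd m i j then c * h (i - m ord0)%N (j - m ord_max)%N else 0.

Lemma pmulE p h i j : pmul p h i j = \sum_(m <- msupp p) term h m p@_m i j.
Proof. by []. Qed.

Lemma pmulwE k p h i j : (msize p <= k)%N ->
  pmul p h i j = \sum_(m : 'X_{1..2 < k}) term h m p@_m i j.
Proof.
move=> lt_pk; pose I : subFinType _ := 'X_{1..2 < k}.
rewrite pmulE (big_mksub I) //=; first last.
  by move=> x /msize_mdeg_lt /leq_trans; apply.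
  by rewrite msupp_uniq.
by rewrite big_rmcond //= => m /memN_msupp_eq0 ->; rewrite /term mul0r if_same.
Qed.

Lemma pmulD_l p q h : pmul (p + q) h = pmul p h + pmul q h.
Proof.
apply: seqE => i j.
pose k := maxn (msize p) (msize q).
have hp : (msize p <= k)%N by rewrite leq_maxl.
have hq : (msize q <= k)%N by rewrite leq_maxr.
have hpq : (msize (p + q) <= k)%N by apply: leq_trans (msizeD_le _ _) _; rewrite geq_max hp hq.
rewrite addsE (pmulwE _ _ _ hpq) (pmulwE _ _ _ hp) (pmulwE _ _ _ hq) -big_split /=.
apply: eq_bigr => m _; rewrite /term mcoeffD; case: ifP => _; [by rewrite mulrDl | by rewrite addr0].
Qed.

Lemma pmul0_l h : pmul 0 h = 0.
Proof. by apply: seqE => i j; rewrite pmulE msupp0 big_nil. Qed.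

Lemma pmulN_l p h : pmul (- p) h = - pmul p h.
Proof.
by apply/eqP; rewrite -subr_eq0 opprK -pmulD_l addNr pmul0_l.
Qed.

Lemma pmulB_l p q h : pmul (p - q) h = pmul p h - pmul q h.
Proof. by rewrite pmulD_l pmulN_l. Qed.

Lemma pmul_sum_l (I : Type) (r : seq I) (Pr : pred I) (F : I -> P) h :
  pmul (\sum_(x <- r | Pr x) F x) h = \sum_(x <- r | Pr x) pmul (F x) h.
Proof.
by elim/big_rec2: _ => [|x a b _ <-]; rewrite ?pmul0_l ?pmulD_l.
Qed.

Lemma pmulD_r p h1 h2 : pmul p (h1 + h2) = pmul p h1 + pmul p h2.
Proof.
apply: seqE => i j; rewrite addsE !pmulE -big_split /=.
by apply: eq_bigr => m _; rewrite /term; case: ifP => _; [rewrite addsE mulrDr | rewrite addr0].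
Qed.

Lemma pmul0_r p : pmul p 0 = 0.
Proof.
by apply: seqE => i j; rewrite pmulE big1 // => m _; rewrite /term zerosE mulr0 if_same.
Qed.

Lemma pmulN_r p h : pmul p (- h) = - pmul p h.
Proof.
by apply/eqP; rewrite -subr_eq0 opprK -pmulD_r addNr pmul0_r.
Qed.

Lemma pmul_sum_r (I : Type) (r : seq I) (Pr : pred I) (F : I -> S) p :
  pmul p (\sum_(x <- r | Pr x) F x) = \sum_(x <- r | Pr x) pmul p (F x).
Proof.
by elim/big_rec2: _ => [|x a b _ <-]; rewrite ?pmul0_r ?pmulD_r.
Qed.

Lemma pmulZ_l c p h : pmul (c *: p) h = sc c (pmul p h).
Proof.
apply: seqE => i j; rewrite /sc.
rewrite (pmulwE _ _ _ (msizeZ_le p c)) (pmulwE _ _ _ (leqnn _)) mulr_sumr.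
by apply: eq_bigr => m _; rewrite /term mcoeffZ; case: ifP; rewrite ?mulr0 // mulrA.
Qed.

Lemma pmul_sc_r c p h : pmul p (sc c h) = sc c (pmul p h).
Proof.
apply: seqE => i j; rewrite /sc !pmulE mulr_sumr.
by apply: eq_bigr => m _; rewrite /term; case: ifP; rewrite ?mulr0 // mulrCA.
Qed.

Lemma pmulX m h i j : pmul 'X_[m] h i j = if cnd m i j then h (i - m ord0)%N (j - m ord_max)%N else 0.
Proof. by rewrite pmulE msuppX big_seq1 /term mcoeffX eqxx mul1r. Qed.

Lemma pmul1 h : pmul 1 h = h.
Proof.
apply: seqE => i j; rewrite -mpolyX0 pmulX /cnd !mnm0E /= !subn0 //.
Qed.

Lemma pmulC c h : pmul c%:MP h = sc c h.
Proof. by rewrite -alg_mpolyC pmulZ_l pmul1. Qed.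

Lemma pmulMX p m h : pmul (p * 'X_[m]) h = pmul p (pmul 'X_[m] h).
Proof.
apply: seqE => i j; rewrite pmulE (perm_big _ (msuppMX p m)) big_map pmulE.
apply: eq_bigr => m' _; rewrite /term mcoeffMX pmulX /cnd !mnmDE.
case: (leqP (m' ord0) i) => h1; case: (leqP (m' ord_max) j) => h2 /=;
 case: (leqP (m ord0) (i - m' ord0)) => h3; case: (leqP (m ord_max) (j - m' ord_max)) => h4 /=;
 rewrite ?mulr0 //.
- have -> : (m ord0 + m' ord0 <= i)%N by lia.
  have -> : (m ord_max + m' ord_max <= j)%N by lia.
  by congr (_ * h _ _); lia.
all: try (have -> : (m ord_max + m' ord_max <= j)%N = false by apply/negbTE; rewrite -ltnNge; lia);
     try (have -> : (m ord0 + m' ord0 <= i)%N = false by apply/negbTE; rewrite -ltnNge; lia);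
     by rewrite ?andbF.
Qed.

Lemma pmulM p q h : pmul (p * q) h = pmul p (pmul q h).
Proof.
rewrite [q in LHS]mpolyE [q in RHS]mpolyE mulr_sumr !pmul_sum_l pmul_sum_r.
apply: eq_bigr => m _; rewrite -scalerAr pmulZ_l pmulZ_l pmul_sc_r pmulMX //.
Qed.

Lemma pmulA p q h : pmul p (pmul q h) = pmul q (pmul p h).
Proof. by rewrite -!pmulM mulrC. Qed.

End Series.


Section Deriv.
Variable K : fieldType.
Local Notation S := (series2 K).
Local Notation P := {mpoly K[2]}.
Implicit Types (p q : P) (h : S).

Lemma scD c h1 h2 : sc c (h1 + h2) = sc c h1 + sc c h2.
Proof. by apply: seqE => i j; rewrite /sc !addsE mulrDr. Qed.

Lemma D1D h1 h2 : D1 (h1 + h2) = D1 h1 + D1 h2.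
Proof. by apply: seqE => i j; rewrite /D1 !addsE mulrDr. Qed.
Lemma D2D h1 h2 : D2 (h1 + h2) = D2 h1 + D2 h2.
Proof. by apply: seqE => i j; rewrite /D2 !addsE mulrDr. Qed.
Lemma D1_0 : D1 (0 : S) = 0.
Proof. by apply: seqE => i j; rewrite /D1 !zerosE mulr0. Qed.
Lemma D2_0 : D2 (0 : S) = 0.
Proof. by apply: seqE => i j; rewrite /D2 !zerosE mulr0. Qed.
Lemma D1N h : D1 (- h) = - D1 h.
Proof. by apply: seqE => i j; rewrite /D1 !oppsE mulrN. Qed.
Lemma D2N h : D2 (- h) = - D2 h.
Proof. by apply: seqE => i j; rewrite /D2 !oppsE mulrN. Qed.
Lemma D1_sum (I : Type) (r : seq I) (Pr : pred I) (F : I -> S) :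
  D1 (\sum_(x <- r | Pr x) F x) = \sum_(x <- r | Pr x) D1 (F x).
Proof. by elim/big_rec2: _ => [|x a b _ <-]; rewrite ?D1_0 ?D1D. Qed.
Lemma D2_sum (I : Type) (r : seq I) (Pr : pred I) (F : I -> S) :
  D2 (\sum_(x <- r | Pr x) F x) = \sum_(x <- r | Pr x) D2 (F x).
Proof. by elim/big_rec2: _ => [|x a b _ <-]; rewrite ?D2_0 ?D2D. Qed.
Lemma D1_sc c h : D1 (sc c h) = sc c (D1 h).
Proof. by apply: seqE => i j; rewrite /D1 /sc mulrCA. Qed.
Lemma D2_sc c h : D2 (sc c h) = sc c (D2 h).
Proof. by apply: seqE => i j; rewrite /D2 /sc mulrCA. Qed.
Lemma D1D2 h : D1 (D2 h) = D2 (D1 h).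
Proof. by apply: seqE => i j; rewrite /D1 /D2 mulrCA. Qed.
Lemma iterD1D2 a h : D2 (iter a (@D1 K) h) = iter a (@D1 K) (D2 h).
Proof. by elim: a => [//|a IH] /=; rewrite -IH D1D2. Qed.

Lemma D1_pmulX m h :
  D1 (pmul 'X_[m] h) = pmul ('X_[m]^`M(ord0)) h + pmul 'X_[m] (D1 h).
Proof.
apply: seqE => i j; rewrite mderivX pmulZ_l addsE /sc /D1 !pmulX /cnd !mnmBE !mnm1E /=.
case: (m ord0) => [|a]; rewrite ?subn0.
  by rewrite mul0r add0r /=; case: ifP => _; rewrite ?mulr0.
have e1 : (a.+1 - 1 = a)%N by lia.
have e2 : (i.+1 - a.+1 = i - a)%N by lia.
rewrite e1 e2 ltnS.
case: (leqP (m ord_max) j) => hb; rewrite ?andbT ?andbF ?mulr0 ?addr0 //.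
case: (ltngtP a i) => hai.
- have -> : (i - a.+1).+1 = (i - a)%N by lia.
  by rewrite -mulrDl -natrD; congr (_%:R * _); lia.
- by rewrite !mulr0 addr0.
- by rewrite hai addr0.
Qed.

Lemma D2_pmulX m h :
  D2 (pmul 'X_[m] h) = pmul ('X_[m]^`M(ord_max)) h + pmul 'X_[m] (D2 h).
Proof.
apply: seqE => i j; rewrite mderivX pmulZ_l addsE /sc /D2 !pmulX /cnd !mnmBE !mnm1E /=.
case: (m ord_max) => [|a]; rewrite ?subn0.
  by rewrite mul0r add0r /=; case: ifP => _; rewrite ?mulr0.
have e1 : (a.+1 - 1 = a)%N by lia.
have e2 : (j.+1 - a.+1 = j - a)%N by lia.
rewrite e1 e2 ltnS.
case: (leqP (m ord0) i) => hb; rewrite ?andbF ?mulr0 ?addr0 //=.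
case: (ltngtP a j) => hai.
- have -> : (j - a.+1).+1 = (j - a)%N by lia.
  by rewrite -mulrDl -natrD; congr (_%:R * _); lia.
- by rewrite !mulr0 addr0.
- by rewrite hai addr0.
Qed.

Lemma D1_pmul p h : D1 (pmul p h) = pmul (p^`M(ord0)) h + pmul p (D1 h).
Proof.
rewrite [p in LHS]mpolyE [p in pmul p (D1 h)]mpolyE [p in p^`M(_)]mpolyE.
rewrite raddf_sum !pmul_sum_l D1_sum -big_split /=.
apply: eq_bigr => m _; rewrite mderivZ !pmulZ_l D1_sc D1_pmulX scD //.
Qed.

Lemma D2_pmul p h : D2 (pmul p h) = pmul (p^`M(ord_max)) h + pmul p (D2 h).
Proof.
rewrite [p in LHS]mpolyE [p in pmul p (D2 h)]mpolyE [p in p^`M(_)]mpolyE.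
rewrite raddf_sum !pmul_sum_l D2_sum -big_split /=.
apply: eq_bigr => m _; rewrite mderivZ !pmulZ_l D2_sc D2_pmulX scD //.
Qed.

End Deriv.


Section Deg.
Variable K : fieldType.
Local Notation S := (series2 K).
Local Notation P := {mpoly K[2]}.
Implicit Types (p q : P) (h : S).

Definition dl p n := (msize p <= n.+1)%N.

Lemma msizeM_sharp p q : (msize (p * q) <= (msize p + msize q).-1)%N.
Proof.
have [->|nz_p ] := eqVneq p 0; first by rewrite mul0r msize0.
have [->|nz_q ] := eqVneq q 0; first by rewrite mulr0 msize0.
have [->|nz_pq] := eqVneq (p * q) 0; first by rewrite msize0.
rewrite -!mlead_deg // addSn addnS /= ltnS.
by have /lemc_mdeg := mleadM_le p q; rewrite mdegD.
Qed.

Lemma dl_mul p q a b : dl p a -> dl q b -> dl (p * q) (a + b).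
Proof.
rewrite /dl => hp hq; apply: leq_trans (msizeM_sharp p q) _; lia.
Qed.

Lemma dl_add p q a : dl p a -> dl q a -> dl (p + q) a.
Proof. by rewrite /dl => hp hq; apply: leq_trans (msizeD_le _ _) _; rewrite geq_max hp hq. Qed.

Lemma dl_opp p a : dl p a -> dl (- p) a.
Proof. by rewrite /dl msizeN. Qed.

Lemma dl_sub p q a : dl p a -> dl q a -> dl (p - q) a.
Proof. by move=> hp hq; apply: dl_add => //; apply: dl_opp. Qed.

Lemma dl_0 a : dl 0 a.
Proof. by rewrite /dl msize0. Qed.

Lemma dl_1 a : dl 1 a.
Proof. by rewrite /dl msizeC oner_neq0. Qed.

Lemma dl_mono p a b : (a <= b)%N -> dl p a -> dl p b.
Proof. by rewrite /dl => hab hp; apply: leq_trans hp _; rewrite ltnS. Qed.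

Lemma dl_sum (I : Type) (r : seq I) (Pr : pred I) (F : I -> P) a :
  (forall x, Pr x -> dl (F x) a) -> dl (\sum_(x <- r | Pr x) F x) a.
Proof.
move=> H; apply: (big_ind (fun x => dl x a)); [exact: dl_0 | move=> x y; exact: dl_add | exact: H].
Qed.

Lemma dl_sum_seq (I : eqType) (r : seq I) (Pr : pred I) (F : I -> P) a :
  (forall x, x \in r -> Pr x -> dl (F x) a) -> dl (\sum_(x <- r | Pr x) F x) a.
Proof.
move=> H; rewrite big_seq_cond; apply: dl_sum => x /andP [xr px]; exact: H.
Qed.

Lemma dl_Z c p a : dl p a -> dl (c *: p) a.
Proof. by rewrite /dl => hp; apply: leq_trans (msizeZ_le _ _) hp. Qed.

Lemma dl_muln p k a : dl p a -> dl (p *+ k) a.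
Proof. by move=> hp; rewrite -scaler_nat; apply: dl_Z. Qed.

Lemma msize_mderiv i p : (msize (p^`M(i)) <= msize p)%N.
Proof.
rewrite [X in (X <= _)%N]msizeE; apply/bigmax_leqP_seq => m; rewrite mcoeff_msupp mcoeff_mderiv => nz _.
have : (m + U_(i))%MM \in msupp p.
  by rewrite mcoeff_msupp; apply: contraNneq nz => ->; rewrite mul0rn.
by move/msize_mdeg_lt; rewrite mdegD mdeg1 addn1 => /ltnW.
Qed.

Lemma dl_deriv i p a : dl p a -> dl (p^`M(i)) a.
Proof. by rewrite /dl => hp; apply: leq_trans (msize_mderiv i p) hp. Qed.

Lemma dl_exp (c : P) d n : dl c d -> dl (c ^+ n) (d * n).
Proof.
move=> hc; elim: n => [|n IH]; first by rewrite expr0 dl_1.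
by rewrite exprS mulnS; apply: dl_mul.
Qed.

Lemma mderiv_exp (i : 'I_2) (c : P) a : (c ^+ a)^`M(i) * c = c^`M(i) * c ^+ a *+ a.
Proof.
elim: a => [|a IH]; first by rewrite expr0 mderivC mul0r mulr0n.
rewrite exprSr mderivM mulrDl IH mulrnAl -mulrA -exprSr.
by rewrite mulrSr; congr (_ + _); rewrite exprSr; ring.
Qed.

Lemma mnm2_eq (m1 m2 : 'X_{1..2}) : m1 ord0 = m2 ord0 -> m1 ord_max = m2 ord_max -> m1 = m2.
Proof.
move=> h0 h1; apply/mnmP => k; case: k => [[|[|k]] hk].
- by have -> : Ordinal hk = ord0 by apply: val_inj.
- by have -> : Ordinal hk = ord_max by apply: val_inj.
- by [].
Qed.

Lemma pmul_domain p h : p != 0 -> pmul p h = 0 -> h = 0.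
Proof.
move=> nzp hz.
set supp := msupp p.
have ex0 : exists u, has (fun m : 'X_{1..2} => m ord0 == u) supp.
  exists (mlead p ord0); apply/hasP; exists (mlead p); last by [].
  by apply: mlead_supp.
pose u0 := ex_minn ex0.
have [m0 m0s m00] : exists2 m, m \in supp & m ord0 = u0.
  rewrite /u0; case: ex_minnP => u /hasP [m ms /eqP mu] _; by exists m.
have u0min : forall m, m \in supp -> (u0 <= m ord0)%N.
  move=> m ms; rewrite /u0; case: ex_minnP => u _ H; apply: H.
  by apply/hasP; exists m.
have ex1 : exists v, has (fun m : 'X_{1..2} => (m ord0 == u0) && (m ord_max == v)) supp.
  by exists (m0 ord_max); apply/hasP; exists m0 => //; rewrite m00 !eqxx.
pose v0 := ex_minn ex1.
have [ms [ms_s ms0 ms1]] : exists m, [/\ m \in supp, m ord0 = u0 & m ord_max = v0].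
  rewrite /v0; case: ex_minnP => v /hasP [m mS /andP [/eqP e1 /eqP e2]] _; by exists m; split.
have v0min : forall m, m \in supp -> m ord0 = u0 -> (v0 <= m ord_max)%N.
  move=> m mS e; rewrite /v0; case: ex_minnP => v _ H; apply: H.
  by apply/hasP; exists m => //; rewrite e !eqxx.
have nzc : p@_ms != 0 by rewrite -mcoeff_msupp.
apply: seqE => i j; rewrite zerosE.
elim/ltn_ind: i j => i IHi j; elim/ltn_ind: j => j IHj.
have := congr1 (fun f : S => f (i + u0)%N (j + v0)%N) hz => /=.
rewrite zerosE pmulE (bigD1_seq ms) ?msupp_uniq //= big1_seq.
  rewrite addr0 /term /cnd ms0 ms1 leq_addl leq_addl /= !addnK.
  by move/eqP; rewrite mulf_eq0 (negbTE nzc) /= => /eqP.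
move=> m /andP [mne mS]; rewrite /term /cnd.
case: ifP => // /andP [c0 c1].
have hu := u0min m mS.
case: (ltngtP u0 (m ord0)) => hmu; last first.
- have hv := v0min m mS (esym hmu).
  case: (ltngtP v0 (m ord_max)) => hmv.
  + by rewrite -hmu addnK IHj ?mulr0 //; lia.
  + by move: hv; rewrite leqNgt hmv.
  + by move: mne; rewrite (@mnm2_eq m ms) ?eqxx // ?ms0 ?ms1.
- by move: hu; rewrite leqNgt hmu.
- by rewrite IHi ?mulr0 //; lia.
Qed.

End Deg.


Section Ev.
Variable K : fieldType.
Local Notation S := (series2 K).
Local Notation P := {mpoly K[2]}.
Implicit Types (p q : P) (h : S).

Definition T (F : S) a b : S := iter a (@D1 K) (iter b (@D2 K) F).
Definition trip := (P * nat * nat)%type.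
Definition ev (F : S) (s : seq trip) : S := \sum_(x <- s) pmul x.1.1 (T F x.1.2 x.2).
Definition Rep (F : S) (g : pred trip) h := exists s, h = ev F s /\ all g s.

Variable F : S.

Lemma T_D1 a b : D1 (T F a b) = T F a.+1 b. Proof. by []. Qed.
Lemma T_D2 a b : D2 (T F a b) = T F a b.+1.
Proof. by rewrite /T iterD1D2. Qed.

Lemma rep0 (g : pred trip) : Rep F g 0.
Proof. by exists [::]; rewrite /ev big_nil. Qed.

Lemma repD (g : pred trip) h1 h2 : Rep F g h1 -> Rep F g h2 -> Rep F g (h1 + h2).
Proof.
move=> [s1 [-> a1]] [s2 [-> a2]]; exists (s1 ++ s2); split; last by rewrite all_cat a1.
by rewrite /ev big_cat.
Qed.

Lemma rep_sum (g : pred trip) (I : eqType) (r : seq I) (H : I -> S) :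
  (forall x, x \in r -> Rep F g (H x)) -> Rep F g (\sum_(x <- r) H x).
Proof.
elim: r => [|x r IH] H0; first by rewrite big_nil; apply: rep0.
rewrite big_cons; apply: repD; first by apply: H0; rewrite mem_head.
by apply: IH => y yr; apply: H0; rewrite in_cons yr orbT.
Qed.

Lemma rep_one (g : pred trip) p a b : g (p, a, b) -> Rep F g (pmul p (T F a b)).
Proof. by move=> ga; exists [:: (p, a, b)]; rewrite /ev big_seq1 /= ga. Qed.

Lemma rep_mono (g g' : pred trip) h : (forall x, g x -> g' x) -> Rep F g h -> Rep F g' h.
Proof.
move=> H [s [-> a]]; exists s; split => //; apply/allP => x xs; apply: H.
by move/allP: a; apply.
Qed.

Lemma rep_bind (g g' : pred trip) (Phi : S -> S) h :
  (forall h1 h2, Phi (h1 + h2) = Phi h1 + Phi h2) -> Phi 0 = 0 ->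
  (forall x, g x -> Rep F g' (Phi (pmul x.1.1 (T F x.1.2 x.2)))) ->
  Rep F g h -> Rep F g' (Phi h).
Proof.
move=> PD P0 H [s [-> a]]; rewrite /ev.
have -> : Phi (\sum_(x <- s) pmul x.1.1 (T F x.1.2 x.2)) =
          \sum_(x <- s) Phi (pmul x.1.1 (T F x.1.2 x.2)).
  by elim/big_rec2: _ => [|x a1 b _ <-]; rewrite ?P0 ?PD.
apply: rep_sum => x xs; apply: H; by move/allP: a; apply.
Qed.

Lemma rep_pmul (g g' : pred trip) q h :
  (forall x, g x -> g' (q * x.1.1, x.1.2, x.2)) -> Rep F g h -> Rep F g' (pmul q h).
Proof.
move=> H; apply: rep_bind; [exact: pmulD_r | exact: pmul0_r |].
by move=> x gx; rewrite -pmulM; apply: rep_one; apply: H.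
Qed.

Lemma rep_opp (g : pred trip) h : (forall x, g x -> g (- x.1.1, x.1.2, x.2)) -> Rep F g h -> Rep F g (- h).
Proof.
move=> H; apply: (rep_bind (Phi := fun h => - h)).
- by move=> ??; rewrite opprD.
- by rewrite oppr0.
by move=> x gx; rewrite -pmulN_l; apply: rep_one; apply: H.
Qed.

Lemma rep_D1 (g g' : pred trip) h :
  (forall x, g x -> g' (x.1.1^`M(ord0), x.1.2, x.2) && g' (x.1.1, x.1.2.+1, x.2)) ->
  Rep F g h -> Rep F g' (D1 h).
Proof.
move=> H; apply: rep_bind; [exact: D1D | exact: D1_0 |].
move=> x /H /andP [h1 h2]; rewrite D1_pmul T_D1; apply: repD; exact: rep_one.
Qed.

Lemma rep_D2 (g g' : pred trip) h :
  (forall x, g x -> g' (x.1.1^`M(ord_max), x.1.2, x.2) && g' (x.1.1, x.1.2, x.2.+1)) ->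
  Rep F g h -> Rep F g' (D2 h).
Proof.
move=> H; apply: rep_bind; [exact: D2D | exact: D2_0 |].
move=> x /H /andP [h1 h2]; rewrite D2_pmul T_D2; apply: repD; exact: rep_one.
Qed.

Lemma sum_extend (G : nat -> S) m n : (m <= n)%N -> (forall k, (m <= k < n)%N -> G k = 0) ->
  \sum_(0 <= k < m) G k = \sum_(0 <= k < n) G k.
Proof.
move=> hmn H; rewrite (big_cat_nat (leq0n m) hmn) /= [X in _ + X]big1_seq ?addr0 //.
by move=> k /andP [_]; rewrite mem_index_iota => /H.
Qed.

Variables (L : seq P) (r d : nat).
Hypothesis hLF : apply1 L F = 0.
Hypothesis hord : order_le L r.
Hypothesis hdeg : forall k, dl L`_k d.
Hypothesis hr : (0 < r)%N.
Local Notation c := L`_r.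

Lemma apply1E : apply1 L F = \sum_(k < size L) pmul L`_k (iter k (@D1 K) F).
Proof. by apply: seqE => i j; rewrite sumsE. Qed.

Lemma key1 : pmul c (T F r 0) = - \sum_(k < r) pmul L`_k (T F k 0).
Proof.
apply/eqP; rewrite -addr_eq0 addrC; apply/eqP.
transitivity (apply1 L F); last exact: hLF.
rewrite apply1E.
transitivity (\sum_(0 <= k < r.+1) pmul L`_k (iter k (@D1 K) F)).
  by rewrite big_mkord big_ord_recr.
rewrite -(big_mkord xpredT (fun k => pmul L`_k (iter k (@D1 K) F))).
rewrite (@sum_extend _ (size L) (maxn (size L) r.+1)) ?leq_maxl //; last first.
  by move=> k /andP [hk _]; rewrite nth_default ?pmul0_l.
rewrite (@sum_extend _ r.+1 (maxn (size L) r.+1)) ?leq_maxr //.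
by move=> k /andP [hk _]; rewrite hord ?pmul0_l.
Qed.

Definition g1 (a b : nat) := fun x : trip => [&& (x.1.2 < r)%N, (x.2 <= b)%N & dl x.1.1 (d * (a + b))].

Lemma phase1_0 a : Rep F (g1 a 0) (pmul (c ^+ a) (T F a 0)).
Proof.
elim: a => [|a IH].
  by rewrite expr0; apply: rep_one; rewrite /g1 /= hr dl_1.
have E : pmul (c ^+ a.+1) (T F a.+1 0) =
  pmul c (D1 (pmul (c ^+ a) (T F a 0))) - pmul (c^`M(ord0) *+ a) (pmul (c ^+ a) (T F a 0)).
  rewrite D1_pmul pmulD_r -!pmulM T_D1 -exprS mulrC mderiv_exp.
  by rewrite -mulrnAl pmulM addrAC subrr add0r.
rewrite E; apply: repD.
- apply: (rep_bind (g := fun x : trip => [&& (x.1.2 <= r)%N, (x.2 == 0)%N & dl x.1.1 (d * a)])).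
  + exact: pmulD_r.
  + exact: pmul0_r.
  + move=> [[p i] t] /= /and3P [hi /eqP ht hp]; subst t.
    rewrite pmulA.
    case: (ltnP i r) => hi'.
    * rewrite -pmulM; apply: rep_one; rewrite /g1 /= hi' addn0 mulnS addnC.
      exact: dl_mul hp (hdeg r).
    * have -> : i = r by apply/eqP; rewrite eqn_leq hi hi'.
      rewrite key1 pmulN_r pmul_sum_r.
      apply: rep_opp; first by move=> [[q i0] t0] /and3P [h1 h2 h3]; rewrite /g1 h1 h2 dl_opp.
      apply: rep_sum => k _; rewrite -pmulM; apply: rep_one.
      rewrite /g1 /= ltn_ord addn0 mulnS addnC; apply: dl_mul => //.
  + apply: rep_D1; last by exact: IH.
    move=> [[p i] t] /and3P [hi ht hp] /=; rewrite leqn0 in ht; rewrite addn0 in hp.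
    by rewrite ht (ltnW hi) hi hp dl_deriv.
- apply: rep_opp.
    by move=> [[q i] t] /and3P [h1 h2 h3]; rewrite /g1 h1 h2 dl_opp.
  apply: rep_pmul IH => -[[p i] t] /and3P [h1 h2 h3]; rewrite /g1 /= h1 h2 /=.
  rewrite addn0 mulnS; apply: dl_mul; first by apply: dl_muln; apply: dl_deriv.
  by move: h3; rewrite addn0.
Qed.

Lemma phase1 a b : Rep F (g1 a b) (pmul (c ^+ (a + b)) (T F a b)).
Proof.
elim: b => [|b IH]; first by rewrite addn0; apply: phase1_0.
have E : pmul (c ^+ (a + b.+1)) (T F a b.+1) =
  pmul c (D2 (pmul (c ^+ (a + b)) (T F a b))) -
    pmul (c^`M(ord_max) *+ (a + b)) (pmul (c ^+ (a + b)) (T F a b)).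
  rewrite D2_pmul pmulD_r -!pmulM T_D2 addnS -exprS mulrC mderiv_exp.
  by rewrite -mulrnAl pmulM addrAC subrr add0r.
have g1S : forall x : trip, g1 a b x -> (x.2 <= b.+1)%N.
  by move=> x /and3P [_ h _]; rewrite ltnW.
rewrite E; apply: repD.
- apply: (rep_pmul (g := fun x : trip => [&& (x.1.2 < r)%N, (x.2 <= b.+1)%N & dl x.1.1 (d * (a + b))])).
    move=> [[p i] t] /= /and3P [h1 h2 h3]; rewrite /g1 /= h1 h2 /= addnS mulnS.
    exact: dl_mul.
  apply: rep_D2 IH => -[[p i] t] /and3P [h1 h2 h3] /=.
  by rewrite h1 ltnS h2 (leqW h2) h3 dl_deriv.
- apply: rep_opp.
    by move=> [[q i] t] /and3P [h1 h2 h3]; rewrite /g1 h1 h2 dl_opp.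
  apply: rep_pmul IH => -[[p i] t] /and3P [h1 h2 h3]; rewrite /g1 /= h1 ltnW //=.
  rewrite addnS mulnS; apply: dl_mul => //; apply: dl_muln; exact: dl_deriv.
Qed.

End Ev.


Section Swap.
Variable K : fieldType.
Local Notation S := (series2 K).
Local Notation P := {mpoly K[2]}.
Implicit Types (p q : P) (h : S).

Definition sw h : S := fun i j => h j i.
Definition swm (m : 'X_{1..2}) : 'X_{1..2} :=
  [multinom (if i == ord0 then m ord_max else m ord0) | i < 2].
Definition swp p : P := \sum_(m <- msupp p) p@_m *: 'X_[swm m].

Lemma swm0 (m : 'X_{1..2}) : swm m ord0 = m ord_max. Proof. by rewrite /swm mnmE. Qed.
Lemma swm1 (m : 'X_{1..2}) : swm m ord_max = m ord0. Proof. by rewrite /swm mnmE. Qed.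
Lemma swmK (m : 'X_{1..2}) : swm (swm m) = m.
Proof. by apply: mnm2_eq; rewrite ?swm0 ?swm1 ?swm0. Qed.
Lemma swm_inj : injective swm. Proof. exact: can_inj swmK. Qed.
Lemma mdeg2 (m : 'X_{1..2}) : mdeg m = (m ord0 + m ord_max)%N.
Proof. rewrite mdegE !big_ord_recr big_ord0 /= add0n; by congr (m _ + _); apply: val_inj. Qed.
Lemma mdeg_swm (m : 'X_{1..2}) : mdeg (swm m) = mdeg m.
Proof. by rewrite !mdeg2 swm0 swm1 addnC. Qed.

Lemma swpE p m : (swp p)@_m = p@_(swm m).
Proof.
rewrite /swp raddf_sum /=.
under eq_bigr => m' _ do rewrite mcoeffZ mcoeffX.
have E : forall m', (swm m' == m) = (m' == swm m).
  by move=> m'; apply/eqP/eqP => [<-|->]; rewrite swmK.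
case: (boolP (swm m \in msupp p)) => hm.
  rewrite (bigD1_seq (swm m)) ?msupp_uniq //= swmK eqxx mulr1 big1 ?addr0 //.
  by move=> m' /negbTE ne; rewrite E ne mulr0.
rewrite big1_seq ?(memN_msupp_eq0 hm) // => m' /andP [_ hm'].
by rewrite E; case: eqP => [e|]; [rewrite -e hm' in hm | rewrite mulr0].
Qed.

Lemma swpK p : swp (swp p) = p.
Proof. by apply/mpolyP => m; rewrite !swpE swmK. Qed.

Lemma swp0 : swp 0 = 0.
Proof. by rewrite /swp msupp0 big_nil. Qed.

Lemma swp_eq0 p : (swp p == 0) = (p == 0).
Proof.
apply/eqP/eqP => [h|->]; last exact: swp0.
by rewrite -[p]swpK h swp0.
Qed.

Lemma msize_swp_le p : (msize (swp p) <= msize p)%N.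
Proof.
rewrite [X in (X <= _)%N]msizeE; apply/bigmax_leqP_seq => m; rewrite mcoeff_msupp swpE => nz _.
rewrite -mcoeff_msupp in nz; have := msize_mdeg_lt nz; by rewrite mdeg_swm.
Qed.

Lemma msize_swp p : msize (swp p) = msize p.
Proof.
by apply/eqP; rewrite eqn_leq msize_swp_le /= -{1}[p]swpK msize_swp_le.
Qed.

Lemma dl_swp p n : dl (swp p) n = dl p n.
Proof. by rewrite /dl msize_swp. Qed.

Lemma msupp_swp p : perm_eq (msupp (swp p)) [seq swm m | m <- msupp p].
Proof.
have -> : swp p = \sum_(m' <- [seq swm m | m <- msupp p]) p@_(swm m') *: 'X_[m'].
  by rewrite big_map /swp; apply: eq_bigr => m _; rewrite swmK.
apply: msupp_sumX; first by rewrite map_inj_uniq ?msupp_uniq //; exact: swm_inj.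
by move=> m /mapP [m' hm' ->]; rewrite swmK -mcoeff_msupp.
Qed.

Lemma pmul_sw p h : pmul (swp p) (sw h) = sw (pmul p h).
Proof.
apply: seqE => i j; rewrite /sw pmulE (perm_big _ (msupp_swp p)) big_map pmulE.
apply: eq_bigr => m _; rewrite /term /cnd swpE swmK swm0 swm1 andbC //.
Qed.

Lemma swK h : sw (sw h) = h. Proof. by []. Qed.
Lemma sw_inj : injective sw. Proof. exact: can_inj swK. Qed.
Lemma swD h1 h2 : sw (h1 + h2) = sw h1 + sw h2. Proof. by []. Qed.
Lemma sw0 : sw 0 = 0. Proof. by []. Qed.
Lemma sw_sum (I : Type) (r : seq I) (Pr : pred I) (G : I -> S) :
  sw (\sum_(x <- r | Pr x) G x) = \sum_(x <- r | Pr x) sw (G x).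
Proof. by apply: seqE => i j; rewrite /sw !sumsE. Qed.
Lemma sw_D1 h : sw (D1 h) = D2 (sw h). Proof. by []. Qed.
Lemma sw_D2 h : sw (D2 h) = D1 (sw h). Proof. by []. Qed.
Lemma sw_iterD1 k h : sw (iter k (@D1 K) h) = iter k (@D2 K) (sw h).
Proof. by elim: k => //= k IH; rewrite sw_D1 IH. Qed.
Lemma sw_iterD2 k h : sw (iter k (@D2 K) h) = iter k (@D1 K) (sw h).
Proof. by elim: k => //= k IH; rewrite sw_D2 IH. Qed.

Lemma iterD2D1 a b h : iter a (@D2 K) (iter b (@D1 K) h) = iter b (@D1 K) (iter a (@D2 K) h).
Proof. by elim: a => //= a IH; rewrite IH iterD1D2. Qed.

Lemma sw_T F a b : sw (T F a b) = T (sw F) b a.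
Proof. by rewrite /T sw_iterD1 sw_iterD2 iterD2D1. Qed.

Lemma pmul_sw_exp c n h : pmul (swp c ^+ n) (sw h) = sw (pmul (c ^+ n) h).
Proof.
elim: n h => [|n IH] h; first by rewrite !expr0 !pmul1.
by rewrite !exprS !pmulM IH pmul_sw.
Qed.

Lemma nth_map_swp (L : seq P) k : (map swp L)`_k = swp L`_k.
Proof.
case: (ltnP k (size L)) => hk; first by rewrite (nth_map 0).
by rewrite !nth_default ?size_map // swp0.
Qed.

Lemma apply1_sum (L : seq P) G : apply1 L G = \sum_(k < size L) pmul L`_k (iter k (@D1 K) G).
Proof. by apply: seqE => i j; rewrite sumsE. Qed.
Lemma apply2_sum (L : seq P) G : apply2 L G = \sum_(k < size L) pmul L`_k (iter k (@D2 K) G).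
Proof. by apply: seqE => i j; rewrite sumsE. Qed.

Lemma apply2_sw (L : seq P) F : apply2 (map swp L) (sw F) = sw (apply1 L F).
Proof.
rewrite apply2_sum apply1_sum sw_sum size_map.
by apply: eq_bigr => k _; rewrite nth_map_swp -sw_iterD1 pmul_sw.
Qed.

Lemma apply1_sw (L : seq P) F : apply1 (map swp L) (sw F) = sw (apply2 L F).
Proof.
rewrite apply2_sum apply1_sum sw_sum size_map.
by apply: eq_bigr => k _; rewrite nth_map_swp -sw_iterD2 pmul_sw.
Qed.

Lemma rep_sw (F : S) (g g' : pred (trip K)) h :
  (forall x, g x -> g' (swp x.1.1, x.2, x.1.2)) -> Rep (sw F) g h -> Rep F g' (sw h).
Proof.
move=> H [s [-> a]]; rewrite /ev sw_sum.
apply: rep_sum => x xs.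
have -> : sw (pmul x.1.1 (T (sw F) x.1.2 x.2)) = pmul (swp x.1.1) (T F x.2 x.1.2).
  by rewrite -pmul_sw sw_T swK.
apply: rep_one; apply: H; by move/allP: a; apply.
Qed.

End Swap.


Section Comb.
Variable K : fieldType.
Local Notation S := (series2 K).
Local Notation P := {mpoly K[2]}.
Implicit Types (p q : P) (h : S).

Variables (F : S) (L1 L2 : seq P) (r1 r2 d : nat).
Hypothesis h1F : apply1 L1 F = 0.
Hypothesis ord1 : order_le L1 r1.
Hypothesis deg1 : forall k, dl L1`_k d.
Hypothesis r1pos : (0 < r1)%N.
Hypothesis h2F : apply2 L2 F = 0.
Hypothesis ord2 : order_le L2 r2.
Hypothesis deg2 : forall k, dl L2`_k d.
Hypothesis r2pos : (0 < r2)%N.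
Local Notation c1 := L1`_r1.
Local Notation c2 := L2`_r2.

Lemma phase2 i t : Rep F (fun x : trip K => [&& (x.1.2 <= i)%N, (x.2 < r2)%N & dl x.1.1 (d * (t + i))])
  (pmul (c2 ^+ (t + i)) (T F i t)).
Proof.
have hF : apply1 (map (@swp K) L2) (sw F) = 0 by rewrite apply1_sw h2F.
have ho : order_le (map (@swp K) L2) r2 by move=> k hk; rewrite nth_map_swp ord2 ?swp0.
have hd : forall k, dl (map (@swp K) L2)`_k d by move=> k; rewrite nth_map_swp dl_swp.
have := phase1 hF ho hd r2pos t i.
rewrite nth_map_swp -sw_T pmul_sw_exp => H.
rewrite -[pmul _ _]swK; apply: rep_sw H.
by move=> [[p a] b] /and3P [h1 h2 h3] /=; rewrite h1 h2 dl_swp.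
Qed.

Variables (A B : nat).
Local Notation Q := (c1 ^+ A * c2 ^+ B).

Definition gred (r1 r2 delta : nat) := fun x : trip K =>
  [&& (x.1.2 < r1)%N, (x.2 < r2)%N & dl x.1.1 delta].

Lemma combined a b : (a + b <= A)%N -> (b + r1 <= B.+1)%N ->
  Rep F (gred r1 r2 (d * (A + B))) (pmul Q (T F a b)).
Proof.
move=> hA hB.
have -> : Q = (c1 ^+ (A - (a + b)) * c2 ^+ B) * c1 ^+ (a + b).
  by rewrite mulrAC -exprD subnK.
rewrite pmulM.
apply: rep_bind (phase1 h1F ord1 deg1 r1pos a b); [exact: pmulD_r | exact: pmul0_r|].
move=> [[p i] t]; rewrite /g1 /= => /and3P [hi ht hp].
have htB : (t + i <= B)%N by lia.
have -> : pmul (c1 ^+ (A - (a + b)) * c2 ^+ B) (pmul p (T F i t)) =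
  pmul (c1 ^+ (A - (a + b)) * c2 ^+ (B - (t + i)) * p) (pmul (c2 ^+ (t + i)) (T F i t)).
  rewrite -!pmulM; congr pmul.
  by rewrite -[in LHS](subnK htB) exprD; ring.
apply: rep_pmul (phase2 i t) => -[[q i'] j] /= /and3P [h1 h2 h3] /=.
rewrite /gred /= h2 (leq_ltn_trans h1 hi) /=.
have e := dl_exp (A - (a + b)) (deg1 r1).
have e2 := dl_exp (B - (t + i)) (deg2 r2).
have := dl_mul (dl_mul (dl_mul e e2) hp) h3.
apply: dl_mono; rewrite -!mulnDr; apply: leq_mul => //; lia.
Qed.

Variables (rL dL : nat) (l : nat -> nat -> P).
Hypothesis hl : forall a b, (a + b <= rL)%N -> dl (l a b) dL.

Definition gk (k : nat) := fun x : trip K =>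
  [&& (x.1.2 + x.2 <= rL + k)%N, (x.2 <= rL)%N & dl x.1.1 dL].

Lemma apply12E : apply12 rL l F =
  \sum_(a < rL.+1) \sum_(b < (rL - a).+1) pmul (l a b) (T F a b).
Proof. by apply: seqE => i j; rewrite sumsE; apply: eq_bigr => a _; rewrite sumsE. Qed.

Lemma rep_g k : Rep F (gk k) (iter k (@D1 K) (apply12 rL l F)).
Proof.
elim: k => [|k IH] /=.
  rewrite apply12E; apply: rep_sum => a _; apply: rep_sum => b _; apply: rep_one.
  have hab : (a + b <= rL)%N by have := ltn_ord b; have := ltn_ord a; lia.
  have hb : (b <= rL)%N by lia.
  by rewrite /gk /= addn0 hab hb hl.
apply: rep_D1 IH => -[[p a] b]; rewrite /gk /= => /and3P [h1 h2 h3].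
rewrite h2 dl_deriv // h3 /= andbT; apply/andP; split; lia.
Qed.

Lemma rep_Qg k : (rL + k <= A)%N -> (rL + r1 <= B.+1)%N ->
  Rep F (gred r1 r2 (dL + d * (A + B))) (pmul Q (iter k (@D1 K) (apply12 rL l F))).
Proof.
move=> hA hB.
apply: rep_bind (rep_g k); [exact: pmulD_r | exact: pmul0_r|].
move=> [[p a] b]; rewrite /gk /= => /and3P [h1 h2 h3].
have hA' : (a + b <= A)%N by lia.
have hB' : (b + r1 <= B.+1)%N by lia.
rewrite pmulA; apply: rep_pmul (combined hA' hB').
move=> [[q i] j]; rewrite /gred /= => /and3P [g1 g2 g3]; rewrite g1 g2 /=.
exact: dl_mul.
Qed.

Lemma coordE (s : seq (trip K)) : all (fun x : trip K => (x.1.2 < r1)%N && (x.2 < r2)%N) s ->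
  ev F s = \sum_(i < r1) \sum_(j < r2)
     pmul (\sum_(x <- s | (x.1.2 == i) && (x.2 == j)) x.1.1) (T F i j).
Proof.
elim: s => [|x s IH] /=.
  rewrite /ev big_nil; symmetry; apply: big1 => i _; apply: big1 => j _.
  by rewrite big_nil pmul0_l.
move=> /andP [/andP [hxa hxb] hs]; rewrite /ev big_cons -/(ev F s) (IH hs).
have -> : \sum_(i < r1) \sum_(j < r2)
     pmul (\sum_(y <- x :: s | (y.1.2 == i) && (y.2 == j)) y.1.1) (T F i j) =
   \sum_(i < r1) \sum_(j < r2) (pmul (if (x.1.2 == i) && (x.2 == j) then x.1.1 else 0) (T F i j) +
     pmul (\sum_(y <- s | (y.1.2 == i) && (y.2 == j)) y.1.1) (T F i j)).
  apply: eq_bigr => i _; apply: eq_bigr => j _; rewrite big_cons -pmulD_l.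
  by case: ifP; rewrite ?add0r.
symmetry; under eq_bigr => i _ do rewrite big_split /=.
rewrite big_split /=; symmetry; congr (_ + _).
rewrite (bigD1 (Ordinal hxa)) //= (bigD1 (Ordinal hxb)) //= !eqxx /=.
rewrite big1 ?addr0; last first.
  move=> j nj; have -> : (x.2 == j) = (Ordinal hxb == j) by [].
  by rewrite eq_sym (negbTE nj) pmul0_l.
rewrite big1 ?addr0 // => i ni; apply: big1 => j _.
have -> : (x.1.2 == i) = (Ordinal hxa == i) by [].
by rewrite eq_sym (negbTE ni) /= pmul0_l.
Qed.

Lemma rep_coord (delta : nat) h : Rep F (gred r1 r2 delta) h ->
  exists C : 'M[P]_(r1, r2), h = \sum_(i < r1) \sum_(j < r2) pmul (C i j) (T F i j) /\
    forall i j, dl (C i j) delta.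
Proof.
move=> [s [-> hs]].
exists (\matrix_(i < r1, j < r2) \sum_(x <- s | (x.1.2 == i) && (x.2 == j)) x.1.1).
split.
  rewrite coordE; last by apply: sub_all hs => x /and3P [-> ->].
  by apply: eq_bigr => i _; apply: eq_bigr => j _; rewrite mxE.
move=> i j; rewrite mxE; apply: dl_sum_seq => x xs _.
by move/allP: hs => /(_ x xs) /and3P [_ _ ->].
Qed.

End Comb.


Section Kernel.
Variable K : fieldType.
Local Notation P := {mpoly K[2]}.

Lemma dl_prod m (G : 'I_m -> P) E : (forall i, dl (G i) E) -> dl (\prod_(i < m) G i) (m * E).
Proof.
elim: m G => [|m IH] G H; first by rewrite big_ord0 dl_1.
rewrite big_ord_recr /= mulSn addnC; apply: dl_mul => //; apply: IH => i; exact: H.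
Qed.

Lemma dl_sign (b : nat) : dl ((-1 : P) ^+ b) 0.
Proof.
have h1 : dl (-1 : P) 0 by apply: dl_opp; apply: dl_1.
by have := dl_exp b h1; rewrite mul0n.
Qed.

Lemma dl_det m (A : 'M[P]_m) E : (forall i j, dl (A i j) E) -> dl (\det A) (m * E).
Proof.
move=> H; rewrite /determinant; apply: dl_sum => s _.
rewrite -[(m * E)%N]add0n; apply: dl_mul; first exact: dl_sign.
by apply: dl_prod => i; apply: H.
Qed.

Lemma dl_adj m (A : 'M[P]_m.+1) E : (forall i j, dl (A i j) E) -> forall i j, dl (\adj A i j) (m * E).
Proof.
move=> H i j; rewrite mxE /cofactor -[(m * E)%N]add0n; apply: dl_mul; first exact: dl_sign.
by apply: dl_det => a b; rewrite !mxE.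
Qed.

Lemma rowv_neq0 n (y : 'rV[P]_n) : y != 0 -> exists j, y 0 j != 0.
Proof.
move=> nz; apply/existsP; apply: contraNT nz; rewrite negb_exists => /forallP H.
by apply/eqP/rowP => j; rewrite mxE; apply/eqP; move: (H j); rewrite negbK.
Qed.

Lemma kernel n (M : 'M[P]_(1 + n, n)) E : (forall i j, dl (M i j) E) ->
  exists v : 'rV[P]_(1 + n), [/\ v != 0, v *m M = 0 & forall j, dl (v 0 j) (n * E)].
Proof.
elim: n M => [|m IH] M H.
  exists (const_mx 1); split.
  - by apply/eqP => /rowP /(_ 0); rewrite !mxE => /eqP; rewrite oner_eq0.
  - by apply/matrixP => i j; case: j.
  - by move=> j; rewrite mxE dl_1.
set r := usubmx M : 'M_(1, m.+1).
set M1 := dsubmx M : 'M_(m.+1, m.+1).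
have eM : M = col_mx r M1 by rewrite vsubmxK.
have HM1 : forall i j, dl (M1 i j) E by move=> i j; rewrite /M1 mxE.
have Hr : forall i j, dl (r i j) E by move=> i j; rewrite /r mxE.
have [d0|dn0] := eqVneq (\det M1) 0.
- have /det0P [y ny yM] : \det M1^T == 0 by rewrite det_tr d0.
  have [jj hjj] := rowv_neq0 ny.
  have HC : forall i j, dl (col' jj M1 i j) E by move=> i j; rewrite mxE; apply: HM1.
  have [v' [nv' v'M dv']] := IH (col' jj M1) HC.
  have z0 : v' *m M1 = 0.
    set z := v' *m M1.
    have zl : forall k, z 0 (lift jj k) = 0.
      move=> k; transitivity ((v' *m col' jj M1) 0 k); last by rewrite v'M mxE.
      by rewrite /z !mxE; apply: eq_bigr => i _; rewrite [in RHS]mxE.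
    have My : M1 *m y^T = 0 by rewrite -[M1]trmxK -trmx_mul yM trmx0.
    have zy : z *m y^T = 0 by rewrite /z -mulmxA My mulmx0.
    have zj : z 0 jj = 0.
      have := congr1 (fun A : 'M[P]_1 => A 0 0) zy.
      rewrite [in X in _ = X]mxE [in X in X = _]mxE (bigD1 jj) //= big1 ?addr0.
        by rewrite [y^T _ _]mxE => /eqP; rewrite mulf_eq0 (negbTE hjj) orbF => /eqP.
      move=> k nk; case: (unliftP jj k) => [k' ek|e]; first by rewrite ek zl mul0r.
      by rewrite e eqxx in nk.
    apply/rowP => k; rewrite [RHS]mxE; case: (unliftP jj k) => [k' ->|->]; [exact: zl | exact: zj].
  exists (row_mx 0 v'); split.
  + by apply: contra nv' => /eqP; rewrite -row_mx0 => /eq_row_mx [_ ->].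
  + by rewrite eM mul_row_col mul0mx add0r z0.
  + move=> j; case: (splitP j) => j' e; [rewrite (_ : j = lshift _ j'); last exact: val_inj | rewrite (_ : j = rshift _ j'); last exact: val_inj]; rewrite ?row_mxEl ?row_mxEr ?mxE ?dl_0 //.
    by apply: dl_mono (dv' j'); rewrite leq_mul2r leqnSn orbT.
- exists (row_mx (\det M1)%:M (- (r *m \adj M1))); split.
  + apply/eqP => /rowP /(_ (lshift _ 0)); rewrite row_mxEl !mxE eqxx mulr1n.
    by move/eqP; rewrite (negbTE dn0).
  + rewrite eM mul_row_col mul_scalar_mx mulNmx -mulmxA mul_adj_mx mul_mx_scalar.
    by rewrite subrr.
  + move=> j; case: (splitP j) => j' e; [rewrite (_ : j = lshift _ j'); last exact: val_inj | rewrite (_ : j = rshift _ j'); last exact: val_inj]; rewrite ?row_mxEl ?row_mxEr !mxE.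
    * rewrite (ord1 j') eqxx mulr1n; exact: dl_det.
    * apply: dl_opp; apply: dl_sum => i _; rewrite mulSn; apply: dl_mul => //.
      exact: dl_adj.
Qed.

End Kernel.


Section Main.
Variable K : fieldType.
Local Notation S := (series2 K).
Local Notation P := {mpoly K[2]}.
Implicit Types (p q : P) (h : S).

Lemma sum_extend' (G : nat -> S) m n : (m <= n)%N -> (forall k, (m <= k < n)%N -> G k = 0) ->
  \sum_(0 <= k < m) G k = \sum_(0 <= k < n) G k.
Proof.
move=> hmn H; rewrite (big_cat_nat (leq0n m) hmn) /= [X in _ + X]big1_seq ?addr0 //.
by move=> k /andP [_]; rewrite mem_index_iota => /H.
Qed.

Lemma apply1_trunc (L : seq P) r (F : S) : order_le L r ->
  apply1 L F = \sum_(k < r.+1) pmul L`_k (iter k (@D1 K) F).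
Proof.
move=> hord; rewrite apply1_sum.
rewrite -(big_mkord xpredT (fun k => pmul L`_k (iter k (@D1 K) F))).
rewrite -(big_mkord xpredT (fun k => pmul L`_k (iter k (@D1 K) F))).
rewrite (@sum_extend' _ (size L) (maxn (size L) r.+1)) ?leq_maxl //; last first.
  by move=> k /andP [hk _]; rewrite nth_default ?pmul0_l.
rewrite (@sum_extend' _ r.+1 (maxn (size L) r.+1)) ?leq_maxr //.
by move=> k /andP [hk _]; rewrite hord ?pmul0_l.
Qed.

Lemma exact_order (L : seq P) rf : nonzero_op L -> order_le L rf ->
  exists r, [/\ (r <= rf)%N, L`_r != 0 & order_le L r].
Proof.
move=> [k0 hk0] ho.
have ex : exists k, L`_k != 0 by exists k0.
have bnd : forall k, L`_k != 0 -> (k <= rf)%N.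
  move=> k nz; rewrite leqNgt; apply/negP => hk; by rewrite ho ?eqxx in nz.
case: (ex_maxnP ex bnd) => r hr hmax; exists r; split => //.
  exact: bnd.
move=> k hk; apply/eqP; apply: contraTT hk => nz; rewrite -leqNgt; exact: hmax.
Qed.

Lemma iterD1_0 k : iter k (@D1 K) 0 = 0.
Proof. by elim: k => //= k ->; rewrite D1_0. Qed.
Lemma iterD2_0 k : iter k (@D2 K) 0 = 0.
Proof. by elim: k => //= k ->; rewrite D2_0. Qed.

Lemma apply12_0 rL (l : nat -> nat -> P) : apply12 rL l (0 : S) = 0.
Proof.
apply: seqE => i j; rewrite /apply12 big1 // => a _; rewrite big1 // => b _.
by rewrite iterD2_0 iterD1_0 pmul0_r.
Qed.

Lemma apply1_0 (L : seq P) : apply1 L (0 : S) = 0.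
Proof. by rewrite apply1_sum big1 // => k _; rewrite iterD1_0 pmul0_r. Qed.

Lemma triv_op (rf e : nat) : let A : seq P := [:: 1] in
  [/\ nonzero_op A, order_le A rf & degree_le A e].
Proof.
split.
- by exists 0%N; rewrite /= oner_neq0.
- by move=> k hk; rewrite nth_default //; case: k hk.
- move=> [|k] /=; first by rewrite msizeC oner_neq0.
  by rewrite nth_nil msize0.
Qed.

End Main.


Section Main1.
Variable K : fieldType.
Local Notation S := (series2 K).
Local Notation P := {mpoly K[2]}.
Implicit Types (p q : P) (h : S).

Lemma main1 (F : S) (rf d : nat) (L1 L2 : seq P)
  (nz1 : nonzero_op L1) (o1 : order_le L1 rf) (dg1 : degree_le L1 d) (a1 : apply1 L1 F = 0)
  (nz2 : nonzero_op L2) (o2 : order_le L2 rf) (dg2 : degree_le L2 d) (a2 : apply2 L2 F = 0)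
  (rL dL : nat) (l : nat -> nat -> P) (hl : forall a b, (a + b <= rL)%N -> dl (l a b) dL) :
  exists A1 : seq P, [/\ nonzero_op A1, order_le A1 (rf ^ 2),
     degree_le A1 ((dL + 2 * d * (rf ^ 2 + rL)) * rf ^ 2) & apply1 A1 (apply12 rL l F) = 0].
Proof.
have [r1 [hr1 c1nz o1']] := exact_order nz1 o1.
have [r2 [hr2 c2nz o2']] := exact_order nz2 o2.
have deg1 : forall k, dl L1`_k d by move=> k; exact: dg1 k.
have deg2 : forall k, dl L2`_k d by move=> k; exact: dg2 k.
have trivial_case : F = 0 -> exists A1 : seq P, [/\ nonzero_op A1, order_le A1 (rf ^ 2),
     degree_le A1 ((dL + 2 * d * (rf ^ 2 + rL)) * rf ^ 2) & apply1 A1 (apply12 rL l F) = 0].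
  move=> ->; exists [:: 1]; have [h1 h2 h3] := @triv_op K (rf ^ 2) ((dL + 2 * d * (rf ^ 2 + rL)) * rf ^ 2).
  by split => //; rewrite apply12_0 apply1_0.
case: (posnP r1) => [r10|r1pos].
  apply: trivial_case; apply: (pmul_domain c1nz).
  by have := a1; rewrite (apply1_trunc _ o1') r10 big_ord1.
case: (posnP r2) => [r20|r2pos].
  apply: trivial_case; apply: sw_inj; rewrite sw0.
  have nz : swp L2`_r2 != 0 by rewrite swp_eq0.
  apply: (pmul_domain nz).
  have o2s : order_le (map (@swp K) L2) r2 by move=> k hk; rewrite nth_map_swp o2' ?swp0.
  have := apply1_sw L2 F; rewrite a2 (apply1_trunc _ o2s) r20 big_ord1 /= nth_map_swp => ->.
  by [].
pose N := (r1 * r2)%N.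
pose A := (rL + N)%N.
pose B := (rL + r1).-1.
pose E := (dL + d * (A + B))%N.
pose Q := L1`_r1 ^+ A * L2`_r2 ^+ B.
pose g := apply12 rL l F.
have hB : (rL + r1 <= B.+1)%N by rewrite /B; lia.
have Hk : forall k : 'I_(1 + N), exists C : 'M[P]_(r1, r2),
   pmul Q (iter k (@D1 K) g) = \sum_(i < r1) \sum_(j < r2) pmul (C i j) (T F i j) /\
   forall i j, dl (C i j) E.
  move=> k; apply: rep_coord; apply: (rep_Qg a1 o1' deg1 r1pos a2 o2' deg2 r2pos hl) => //.
  by have := ltn_ord k; rewrite /A; lia.
have [C HC] := choice Hk.
pose M : 'M[P]_(1 + N, N) := \matrix_(k, c) mxvec (C k) 0 c.
have HM : forall k c, dl (M k c) E.
  move=> k c; rewrite mxE; case/mxvec_indexP: c => i j; rewrite mxvecE; exact: (proj2 (HC k)).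
have [v [nv vM dv]] := kernel HM.
pose A1 := mkseq (fun k => v 0 (inord k)) (1 + N).
have hA1 : forall k : 'I_(1 + N), A1`_k = v 0 k.
  by move=> k; rewrite /A1 nth_mkseq ?ltn_ord // inord_val.
have hN : (N <= rf ^ 2)%N by rewrite /N expnS expn1; apply: leq_mul.
exists A1; split.
- have [j hj] := rowv_neq0 nv; exists j; by rewrite hA1.
- by move=> k hk; rewrite nth_default // size_mkseq; lia.
- move=> k; case: (ltnP k (1 + N)) => hk; last by rewrite nth_default ?size_mkseq // msize0.
  rewrite (hA1 (Ordinal hk)); apply: (dl_mono _ (dv (Ordinal hk))).
  rewrite mulnC; apply: leq_mul => //; rewrite /E leq_add2l [(2 * d)%N]mulnC -mulnA; apply: leq_mul => //.
  rewrite /A /B; have : (r1 <= rf ^ 2)%N.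
    by apply: leq_trans hr1 _; rewrite expnS expn1; case: (rf) => // n; rewrite leq_pmulr.
  lia.
- have Qnz : Q != 0 by rewrite mulf_neq0 // expf_neq0.
  apply: (pmul_domain Qnz).
  rewrite apply1_sum size_mkseq pmul_sum_r.
  transitivity (\sum_(k < 1 + N) \sum_(i < r1) \sum_(j < r2)
                 pmul (v 0 k * C k i j) (T F i j)).
    apply: eq_bigr => k _; rewrite hA1 pmulA (proj1 (HC k)) pmul_sum_r.
    by apply: eq_bigr => i _; rewrite pmul_sum_r; apply: eq_bigr => j _; rewrite pmulM.
  rewrite exchange_big /=.
  under eq_bigr => i _ do rewrite exchange_big /=.
  apply: big1 => i _; apply: big1 => j _.
  rewrite -pmul_sum_l.
  have -> : \sum_(k < 1 + N) v 0 k * C k i j = (v *m M) 0 (mxvec_index i j).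
    by rewrite mxE; apply: eq_bigr => k _; rewrite mxE mxvecE.
  by rewrite vM mxE pmul0_l.
Qed.

End Main1.


Section Final.
Variable K : fieldType.
Local Notation S := (series2 K).
Local Notation P := {mpoly K[2]}.

Lemma tri_mk (G : nat -> nat -> S) n :
  \sum_(a < n.+1) \sum_(b < (n - a).+1) G a b =
  \sum_(a < n.+1) \sum_(b < n.+1) (if (a + b <= n)%N then G a b else 0).
Proof.
apply: eq_bigr => a _.
have ha : ((n - a).+1 <= n.+1)%N by rewrite ltnS leq_subr.
rewrite (big_ord_widen n.+1 (fun b => G a b) ha) big_mkcond /=.
apply: eq_bigr => b _; have := ltn_ord a; rewrite ltnS => han.
by rewrite ltnS leq_subRL.
Qed.

Lemma tri_swap (G : nat -> nat -> S) n :
  \sum_(a < n.+1) \sum_(b < (n - a).+1) G b a =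
  \sum_(a < n.+1) \sum_(b < (n - a).+1) G a b.
Proof.
rewrite (tri_mk (fun a b => G b a)) tri_mk exchange_big /=.
by apply: eq_bigr => a _; apply: eq_bigr => b _; rewrite addnC.
Qed.

Lemma apply12_sw rL (l : nat -> nat -> P) (F : S) :
  apply12 rL (fun a b => swp (l b a)) (sw F) = sw (apply12 rL l F).
Proof.
rewrite !apply12E sw_sum.
transitivity (\sum_(a < rL.+1) \sum_(b < (rL - a).+1) sw (pmul (l b a) (T F b a))).
  by apply: eq_bigr => a _; apply: eq_bigr => b _; rewrite -sw_T pmul_sw.
rewrite (tri_swap (fun a b => sw (pmul (l a b) (T F a b)))).
by apply: eq_bigr => a _; rewrite sw_sum.
Qed.

End Final.

Theorem lemma3p17 (K : fieldType) (charK0 : [pchar K] =i pred0)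
  (f : series2 K) (rf df : nat) (L1 L2 : seq {mpoly K[2]})
  (hL1nz : nonzero_op L1) (hL1r : order_le L1 rf) (hL1d : degree_le L1 df)
  (hL1f : apply1 L1 f = (fun _ _ => 0))
  (hL2nz : nonzero_op L2) (hL2r : order_le L2 rf) (hL2d : degree_le L2 df)
  (hL2f : apply2 L2 f = (fun _ _ => 0))
  (rL dL : nat) (l : nat -> nat -> {mpoly K[2]})
  (hl : forall a b, (a + b <= rL)%N -> (msize (l a b) <= dL.+1)%N) :
  let g := apply12 rL l f in
  exists A1 A2 : seq {mpoly K[2]},
    [/\ nonzero_op A1, order_le A1 (rf ^ 2), degree_le A1 ((dL + 2 * df * (rf ^ 2 + rL)) * rf ^ 2),
        apply1 A1 g = (fun _ _ => 0) &
     [/\ nonzero_op A2, order_le A2 (rf ^ 2), degree_le A2 ((dL + 2 * df * (rf ^ 2 + rL)) * rf ^ 2)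
        & apply2 A2 g = (fun _ _ => 0)]].
Proof.
move=> g.
have a1 : apply1 L1 f = 0 by [].
have a2 : apply2 L2 f = 0 by [].
have [A1 [n1 o1 d1 e1]] := main1 hL1nz hL1r hL1d a1 hL2nz hL2r hL2d a2 hl.
have nzs : forall L : seq {mpoly K[2]}, nonzero_op L -> nonzero_op (map (@swp K) L).
  by move=> L [k hk]; exists k; rewrite nth_map_swp swp_eq0.
have ors : forall (L : seq {mpoly K[2]}) r, order_le L r -> order_le (map (@swp K) L) r.
  by move=> L r h k hk; rewrite nth_map_swp h ?swp0.
have dgs : forall (L : seq {mpoly K[2]}) e, degree_le L e -> degree_le (map (@swp K) L) e.
  by move=> L e h k; rewrite nth_map_swp msize_swp.
have b1 : apply1 (map (@swp K) L2) (sw f) = 0 by rewrite apply1_sw a2.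
have b2 : apply2 (map (@swp K) L1) (sw f) = 0 by rewrite apply2_sw a1.
have hl' : forall a b, (a + b <= rL)%N -> dl (swp (l b a)) dL.
  by move=> a b hab; rewrite dl_swp; apply: hl; rewrite addnC.
have [A1' [n1' o1' d1' e1']] := main1 (nzs _ hL2nz) (ors _ _ hL2r) (dgs _ _ hL2d) b1
   (nzs _ hL1nz) (ors _ _ hL1r) (dgs _ _ hL1d) b2 hl'.
exists A1, (map (@swp K) A1'); split => //; split.
- exact: nzs.
- exact: ors.
- exact: dgs.
- rewrite apply12_sw in e1'.
  have := apply2_sw A1' (sw g); rewrite e1' => H; exact: H.
Qed.
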